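(* Let $M$ and $N$ be finitely generated, semipositive binoids of finite dimension such that $e_{HK}(M)$ and $e_{HK}(N)$ exist. Then $e_{HK}(M\wedge N)$ exists and $$e_{HK}(M\wedge N)=e_{HK}(M)\cdot e_{HK}(N).$$
   Context: A binoid $(N,+,0,\infty)$ is a commutative monoid $(N,+,0)$ with an element $\infty$ satisfying $a+\infty=\infty$ for all $a\in N$. Write $N^\bullet=N\setminus\{\infty\}$, $N^\times$ for the group of units of $N$ and $N_+=N\setminus N^\times$. $N$ is finitely generated if it is finitely generated as a monoid; semipositive if $N\neq\{\infty\}$ and $N^\times$ is finite. The smash product $M\wedge N$ is the binoid $(M^\bullet\times N^\bullet)\cup\{\infty\}$ with $(a,b)+(c,d)=(a+c,b+d)$ if $a+c\neq\infty$ and $b+d\neq\infty$, and $=\infty$ otherwise. An ideal of $N$ is a nonempty subset $I\subseteq N$ with $I+N\subseteq I$. For an ideal $I$ and $q\in\mathbb N_+$, $[q]I$ denotes the ideal generated by $\{qa: a\in I\}$; $N/I=(N\setminus I)\cup\{\infty\}$. A prime ideal is an ideal $\mathfrak p\neq N$ such that $a+b\in\mathfrak p$ implies $a\in\mathfrak p$ or $b\in\mathfrak p$; the (combinatorial) dimension $\dim N$ is the supremum of the lengths $k$ of chains $\mathfrak p_0\subsetneq\cdots\subsetneq\mathfrak p_k$ of prime ideals. $\operatorname{HKF}(N,q)=\#N/[q]N_+$, with $\#S=|S|-1$ for a finite pointed set $S$, and $e_{HK}(N)=\lim_{q\to\infty}\operatorname{HKF}(N,q)/q^{\dim N}$ over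 all positive integers $q$, when it exists. *)

(* Defs.v *)
From Stdlib Require Import Reals List ClassicalEpsilon.
Open Scope R_scope.

Record binoid_data := Binoid {
  bcar : Type;
  badd : bcar -> bcar -> bcar;
  bzero : bcar;
  binf : bcar
}.

Definition is_binoid (N : binoid_data) : Prop :=
  (forall a b : bcar N, badd N a b = badd N b a) /\
  (forall a b c : bcar N, badd N (badd N a b) c = badd N a (badd N b c)) /\
  (forall a : bcar N, badd N (bzero N) a = a) /\
  (forall a : bcar N, badd N a (binf N) = binf N).

Definition is_unit (N : binoid_data) (a : bcar N) : Prop :=
  exists b, badd N a b = bzero N.
Definition Nplus (N : binoid_data) (a : bcar N) : Prop := ~ is_unit N a.

Inductive gen_by (N : binoid_data) (l : list (bcar N)) : bcar N -> Prop :=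
  | gen_zero : gen_by N l (bzero N)
  | gen_gen : forall g, In g l -> gen_by N l g
  | gen_add : forall a b, gen_by N l a -> gen_by N l b -> gen_by N l (badd N a b).

Definition fin_generated (N : binoid_data) : Prop :=
  exists l : list (bcar N), forall a, gen_by N l a.

Definition semipositive (N : binoid_data) : Prop :=
  (exists a : bcar N, a <> binf N) /\
  (exists l : list (bcar N), forall u, is_unit N u -> In u l).

Definition is_ideal (N : binoid_data) (I : bcar N -> Prop) : Prop :=
  (exists a, I a) /\ (forall a b, I a -> I (badd N a b)).

Definition is_prime (N : binoid_data) (P : bcar N -> Prop) : Prop :=
  is_ideal N P /\ (exists a, ~ P a) /\
  (forall a b, P (badd N a b) -> P a \/ P b).

Definition strict_incl {T : Type} (P Q : T -> Prop) : Prop :=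
  (forall x, P x -> Q x) /\ (exists x, Q x /\ ~ P x).

(* a chain p_0 < p_1 < ... < p_k of prime ideals, given as list [p_0; ...; p_k] *)
Fixpoint strict_chain {T : Type} (p : T -> Prop) (l : list (T -> Prop)) : Prop :=
  match l with
  | nil => True
  | q :: l' => strict_incl p q /\ strict_chain q l'
  end.

Definition prime_chain_of_length (N : binoid_data) (k : nat) : Prop :=
  exists (p0 : bcar N -> Prop) (l : list (bcar N -> Prop)),
    length l = k /\ is_prime N p0 /\ Forall (is_prime N) l /\ strict_chain p0 l.

Definition is_dim (N : binoid_data) (d : nat) : Prop :=
  prime_chain_of_length N d /\ (forall k, prime_chain_of_length N k -> (k <= d)%nat).

Fixpoint nsmul (N : binoid_data) (q : nat) (a : bcar N) : bcar N :=
  match q with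
  | O => bzero N
  | S q' => badd N a (nsmul N q' a)
  end.

(* [q]N_+ : the ideal generated by {q a | a in N_+}, i.e. {q a + x} *)
Definition qNplus (N : binoid_data) (q : nat) (y : bcar N) : Prop :=
  exists a x, Nplus N a /\ y = badd N (nsmul N q a) x.

(* HKF(N, q) = #(N / [q]N_+) = |(N \ [q]N_+) u {inf}| - 1 = k *)
Definition HKF_is (N : binoid_data) (q k : nat) : Prop :=
  exists l : list (bcar N), NoDup l /\ length l = S k /\
    (forall x, In x l <-> (~ qNplus N q x \/ x = binf N)).

(* e_HK(N) exists and equals e (dim N finite; limit over q = 1, 2, ...) *)
Definition eHK_is (N : binoid_data) (e : R) : Prop :=
  exists d : nat, is_dim N d /\
  exists h : nat -> nat, (forall n, HKF_is N (S n) (h n)) /\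
    Un_cv (fun n => INR (h n) / (INR (S n)) ^ d) e.

(* smash product M ^ N, carrier (M^. x N^.) u {inf}, with None = inf *)
Definition pt (N : binoid_data) := { a : bcar N | a <> binf N }.

Definition smash_car (M N : binoid_data) : Type := option (pt M * pt N).

Definition smash_add (M N : binoid_data) (x y : smash_car M N) : smash_car M N :=
  match x, y with
  | Some (a, b), Some (c, d) =>
      match excluded_middle_informative (badd M (proj1_sig a) (proj1_sig c) <> binf M),
            excluded_middle_informative (badd N (proj1_sig b) (proj1_sig d) <> binf N) with
      | left h1, left h2 =>
          Some (exist _ (badd M (proj1_sig a) (proj1_sig c)) h1,
                exist _ (badd N (proj1_sig b) (proj1_sig d)) h2)
      | _, _ => None
      end
  | _, _ => None
  end.

Definition smash_zero (M N : binoid_data) : smash_car M N :=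
  match excluded_middle_informative (bzero M <> binf M),
        excluded_middle_informative (bzero N <> binf N) with
  | left h1, left h2 => Some (exist _ (bzero M) h1, exist _ (bzero N) h2)
  | _, _ => None
  end.

Definition smash (M N : binoid_data) : binoid_data :=
  Binoid (smash_car M N) (smash_add M N) (smash_zero M N) None.

(* Main.v *)
Require Import Defs.
From Stdlib Require Import Reals List ClassicalEpsilon Classical ProofIrrelevance Lia FunctionalExtensionality.


Lemma inf_l (N : binoid_data) : is_binoid N -> forall a, badd N (binf N) a = binf N.
Proof. intros (C&A&Z&I) a. rewrite C. apply I. Qed.
Lemma zero_r (N : binoid_data) : is_binoid N -> forall a, badd N a (bzero N) = a.
Proof. intros (C&A&Z&I) a. rewrite C. apply Z. Qed.
Lemma zero_ne_inf (N : binoid_data) : is_binoid N -> semipositive N -> bzero N <> binf N.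
Proof. intros B [[a Ha] _] E. apply Ha. destruct B as (C&A&Z&I).
  rewrite <- (Z a), E, C, I. reflexivity. Qed.
Lemma nsmul_inf (N : binoid_data) : is_binoid N -> forall n, nsmul N (S n) (binf N) = binf N.
Proof. intros B n. simpl. apply inf_l; auto. Qed.
Lemma nsmul_zero (N : binoid_data) : is_binoid N -> forall n, nsmul N n (bzero N) = bzero N.
Proof. intros B n. induction n; simpl; auto. rewrite IHn. apply zero_r; auto. Qed.

Definition pair_add (M N : binoid_data) (x y : bcar M * bcar N) : bcar M * bcar N :=
  (badd M (fst x) (fst y), badd N (snd x) (snd y)).

Definition nrm (M N : binoid_data) (x : bcar M * bcar N) : bcar M * bcar N :=
  if excluded_middle_informative (fst x = binf M \/ snd x = binf N)
  then (binf M, binf N) else x.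

Lemma nrm_cases (M N : binoid_data) x :
  ((fst x = binf M \/ snd x = binf N) /\ nrm M N x = (binf M, binf N)) \/
  (fst x <> binf M /\ snd x <> binf N /\ nrm M N x = x).
Proof. unfold nrm. destruct excluded_middle_informative as [h|h]; [left; auto|right].
  apply not_or_and in h. tauto. Qed.

Definition emb (M N : binoid_data) (z : smash_car M N) : bcar M * bcar N :=
  match z with None => (binf M, binf N) | Some (x, y) => (proj1_sig x, proj1_sig y) end.

Definition lft (M N : binoid_data) (x : bcar M * bcar N) : smash_car M N :=
  match excluded_middle_informative (fst x <> binf M),
        excluded_middle_informative (snd x <> binf N) with
  | left h1, left h2 => Some (exist _ (fst x) h1, exist _ (snd x) h2)
  | _, _ => None
  end.

Lemma emb_lft M N x : emb M N (lft M N x) = nrm M N x.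
Proof. unfold lft, nrm. destruct x as [u v]; simpl.
  destruct (excluded_middle_informative (u <> binf M)) as [h1|h1];
  destruct (excluded_middle_informative (v <> binf N)) as [h2|h2];
  destruct (excluded_middle_informative (u = binf M \/ v = binf N)) as [h|h]; simpl; auto;
  try (destruct h; contradiction);
  exfalso; apply h; apply NNPP in h1 || apply NNPP in h2; tauto. Qed.

Lemma nrm_emb M N z : nrm M N (emb M N z) = emb M N z.
Proof. destruct (nrm_cases M N (emb M N z)) as [[h e]|(_&_&e)]; auto.
  rewrite e. destruct z as [[[x hx] [y hy]]|]; simpl in *; auto. destruct h; contradiction. Qed.

Lemma emb_inj M N z w : emb M N z = emb M N w -> z = w.
Proof. destruct z as [[[x hx] [y hy]]|]; destruct w as [[[x' hx'] [y' hy']]|]; simpl;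
  intro E; inversion E; subst; auto; try contradiction.
  f_equal. f_equal; f_equal; apply proof_irrelevance. Qed.

Lemma nrm_inf M N x : (fst x = binf M \/ snd x = binf N) -> nrm M N x = (binf M, binf N).
Proof. intro h. destruct (nrm_cases M N x) as [[_ e]|(h1&h2&_)]; auto. tauto. Qed.
Lemma nrm_fin M N x : fst x <> binf M -> snd x <> binf N -> nrm M N x = x.
Proof. intros h1 h2. destruct (nrm_cases M N x) as [[h e]|(_&_&e)]; auto. tauto. Qed.

Lemma pair_add_inf M N : is_binoid M -> is_binoid N -> forall x y,
  (fst x = binf M \/ snd x = binf N) ->
  (fst (pair_add M N x y) = binf M \/ snd (pair_add M N x y) = binf N).
Proof. intros BM BN x y [h|h]; unfold pair_add; simpl; rewrite h; rewrite inf_l; auto. Qed.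

Lemma nrm_add M N : is_binoid M -> is_binoid N -> forall x y,
  nrm M N (pair_add M N (nrm M N x) (nrm M N y)) = nrm M N (pair_add M N x y).
Proof. intros BM BN x y.
  destruct (nrm_cases M N x) as [[hx ex]|(hx1&hx2&ex)]; rewrite ex.
  { rewrite !nrm_inf; auto. apply pair_add_inf; auto. apply pair_add_inf; auto. }
  destruct (nrm_cases M N y) as [[hy ey]|(hy1&hy2&ey)]; rewrite ey; auto.
  assert (CM := proj1 BM); assert (CN := proj1 BN).
  rewrite !nrm_inf; auto.
  - unfold pair_add; simpl; rewrite (CM (fst x)), (CN (snd x)).
    apply (pair_add_inf M N BM BN y x); auto.
  - unfold pair_add; simpl. destruct BM as (_&_&_&IM); destruct BN as (_&_&_&IN). rewrite IM; auto.
Qed.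

Lemma emb_add M N : is_binoid M -> is_binoid N -> forall z w,
  emb M N (smash_add M N z w) = nrm M N (pair_add M N (emb M N z) (emb M N w)).
Proof. intros BM BN z w.
  destruct z as [[[x hx] [y hy]]|]; destruct w as [[[x' hx'] [y' hy']]|];
  unfold smash_add, pair_add; simpl.
  - destruct (excluded_middle_informative (badd M x x' <> binf M)) as [h1|h1];
    destruct (excluded_middle_informative (badd N y y' <> binf N)) as [h2|h2]; simpl;
    unfold nrm; simpl; destruct excluded_middle_informative as [h|h]; auto;
    try (destruct h; contradiction); exfalso; apply h;
    (apply NNPP in h1 || apply NNPP in h2); tauto.
  - destruct BM as (CM&_&_&IM); destruct BN as (CN&_&_&IN). rewrite IM, IN.
    unfold nrm; simpl; destruct excluded_middle_informative; tauto.
  - rewrite !inf_l by auto. unfold nrm; simpl; destruct excluded_middle_informative; tauto.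
  - rewrite !inf_l by auto. unfold nrm; simpl; destruct excluded_middle_informative; tauto.
Qed.


Definition HB M N := is_binoid M /\ is_binoid N /\ bzero M <> binf M /\ bzero N <> binf N.

Lemma emb_zero M N : HB M N -> emb M N (smash_zero M N) = (bzero M, bzero N).
Proof. intros (_&_&h1&h2). unfold smash_zero.
  destruct (excluded_middle_informative (bzero M <> binf M)); [|contradiction].
  destruct (excluded_middle_informative (bzero N <> binf N)); [|contradiction]. reflexivity. Qed.

Lemma emb_None M N : emb M N None = (binf M, binf N).
Proof. reflexivity. Qed.

Lemma lft_emb M N z : lft M N (emb M N z) = z.
Proof. apply emb_inj. rewrite emb_lft. apply nrm_emb. Qed.

Lemma smash_comm M N : HB M N -> forall z w, smash_add M N z w = smash_add M N w z.
Proof. intros (BM&BN&_&_) z w. apply emb_inj. rewrite !emb_add by auto.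
  unfold pair_add. rewrite (proj1 BM (fst (emb M N z))), (proj1 BN (snd (emb M N z))). auto. Qed.

Lemma smash_None M N : HB M N -> forall z, smash_add M N z None = None.
Proof. intros (BM&BN&_&_) z. apply emb_inj. rewrite !emb_add by auto.
  simpl. apply nrm_inf. left. unfold pair_add; simpl. apply BM. Qed.

Lemma smash_zero_add M N : HB M N -> forall z, smash_add M N (smash_zero M N) z = z.
Proof. intros H z. pose proof H as (BM&BN&_&_). apply emb_inj. rewrite emb_add, emb_zero by auto.
  unfold pair_add; simpl. rewrite (proj1 (proj2 (proj2 BM))), (proj1 (proj2 (proj2 BN))).
  rewrite <- surjective_pairing. apply nrm_emb. Qed.

Lemma emb_add_nrm M N : HB M N -> forall x y,
  emb M N (smash_add M N (lft M N x) (lft M N y)) = nrm M N (pair_add M N x y).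
Proof. intros (BM&BN&_&_) x y. rewrite emb_add, !emb_lft by auto. apply nrm_add; auto. Qed.

Lemma lft_add M N : HB M N -> forall x y,
  smash_add M N (lft M N x) (lft M N y) = lft M N (pair_add M N x y).
Proof. intros H x y. apply emb_inj. rewrite emb_add_nrm, emb_lft; auto. Qed.

Lemma emb_nsmul M N : HB M N -> forall q z,
  emb M N (nsmul (smash M N) q z) =
  nrm M N (nsmul M q (fst (emb M N z)), nsmul N q (snd (emb M N z))).
Proof. intros H q z. pose proof H as (BM&BN&h1&h2). induction q; simpl.
  - change (emb M N (smash_zero M N) = nrm M N (bzero M, bzero N)).
    rewrite emb_zero by auto. rewrite nrm_fin; auto.
  - rewrite emb_add, IHq by auto. rewrite <- (nrm_emb M N z) at 1.
    rewrite nrm_add by auto. reflexivity. Qed.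

Lemma emb_qsum M N : HB M N -> forall q w x,
  emb M N (smash_add M N (nsmul (smash M N) q w) x) =
  nrm M N (pair_add M N (nsmul M q (fst (emb M N w)), nsmul N q (snd (emb M N w))) (emb M N x)).
Proof. intros H q w x. pose proof H as (BM&BN&_&_).
  rewrite emb_add, emb_nsmul by auto. rewrite <- (nrm_emb M N x) at 1. apply nrm_add; auto. Qed.

Lemma unit_smash M N : HB M N -> forall w,
  is_unit M (fst (emb M N w)) -> is_unit N (snd (emb M N w)) -> is_unit (smash M N) w.
Proof. intros H w [c' hc] [d' hd]. pose proof H as (BM&BN&_&_).
  exists (lft M N (c', d')). simpl. apply emb_inj.
  rewrite emb_add, emb_lft, emb_zero by auto. rewrite <- (nrm_emb M N w) at 1.
  rewrite nrm_add by auto. unfold pair_add; simpl. rewrite hc, hd. apply nrm_fin; apply H. Qed.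

Lemma nunit_lft M N : HB M N -> forall c d, c <> binf M -> d <> binf N ->
  (Nplus M c \/ Nplus N d) -> Nplus (smash M N) (lft M N (c, d)).
Proof. intros H c d hc hd hn [w' E]. pose proof H as (BM&BN&h1&h2). simpl in E.
  apply (f_equal (emb M N)) in E. rewrite emb_add, emb_lft, emb_zero in E by auto.
  rewrite (nrm_fin M N (c,d)) in E by auto.
  destruct (nrm_cases M N (pair_add M N (c, d) (emb M N w'))) as [[_ e]|(_&_&e)]; rewrite e in E.
  - inversion E; auto.
  - unfold pair_add in E; simpl in E. inversion E. destruct hn as [hn|hn]; apply hn; eexists; eauto. Qed.

Lemma qN_smash M N : HB M N -> forall n a b (ha : a <> binf M) (hb : b <> binf N),
  qNplus (smash M N) (S n) (Some (exist _ a ha, exist _ b hb)) <->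
  qNplus M (S n) a \/ qNplus N (S n) b.
Proof. intros H n a b ha hb. pose proof H as (BM&BN&h1&h2). split.
  - intros [w [x [hw E]]]. change (Some (exist _ a ha, exist _ b hb) = smash_add M N (nsmul (smash M N) (S n) w) x) in E. apply (f_equal (emb M N)) in E.
    rewrite emb_qsum in E by auto.
    destruct (nrm_cases M N (pair_add M N (nsmul M (S n) (fst (emb M N w)), nsmul N (S n) (snd (emb M N w))) (emb M N x))) as [[_ e]|(_&_&e)]; rewrite e in E.
    + inversion E; contradiction.
    + unfold pair_add in E; simpl in E. inversion E.
      destruct (classic (is_unit M (fst (emb M N w)))) as [u1|u1].
      * destruct (classic (is_unit N (snd (emb M N w)))) as [u2|u2].
        -- exfalso. apply hw. apply unit_smash; auto.
        -- right. exists (snd (emb M N w)), (snd (emb M N x)). split; auto.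
      * left. exists (fst (emb M N w)), (fst (emb M N x)). split; auto.
  - intros [[c [x [hc E]]]|[d [x [hd E]]]].
    + assert (cne : c <> binf M). { intro e. subst. apply ha. rewrite nsmul_inf, inf_l; auto. }
      exists (lft M N (c, bzero N)), (lft M N (x, b)). split.
      * apply nunit_lft; auto.
      * apply emb_inj. change (badd (smash M N)) with (smash_add M N). rewrite emb_qsum by auto. rewrite !emb_lft.
        rewrite (nrm_fin M N (c, bzero N)) by auto. rewrite (nrm_fin M N (x, b)).
        -- unfold pair_add; simpl. rewrite nsmul_zero, !(proj1 (proj2 (proj2 BN))) by auto.
           simpl in E. rewrite <- E. rewrite nrm_fin; auto.
        -- simpl. intro e; subst; apply ha. simpl. apply BM.
        -- auto.
    + assert (dne : d <> binf N). { intro e. subst. apply hb. rewrite nsmul_inf, inf_l; auto. }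
      exists (lft M N (bzero M, d)), (lft M N (a, x)). split.
      * apply nunit_lft; auto.
      * apply emb_inj. change (badd (smash M N)) with (smash_add M N). rewrite emb_qsum by auto. rewrite !emb_lft.
        rewrite (nrm_fin M N (bzero M, d)) by auto. rewrite (nrm_fin M N (a, x)).
        -- unfold pair_add; simpl. rewrite nsmul_zero, !(proj1 (proj2 (proj2 BM))) by auto.
           simpl in E. rewrite <- E. rewrite nrm_fin; auto.
        -- auto.
        -- simpl. intro e; subst; apply hb. simpl. apply BN.
Qed.

Fixpoint filt (N : binoid_data) (l : list (bcar N)) : list (pt N) :=
  match l with
  | nil => nil
  | x :: l' => match excluded_middle_informative (x <> binf N) with
               | left h => exist _ x h :: filt N l'
               | right _ => filt N l' end
  end.

Lemma filt_In N l a : In a (filt N l) <-> In (proj1_sig a) l.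
Proof. induction l as [|x l IH]; simpl; [tauto|].
  destruct excluded_middle_informative as [h|h]; simpl; rewrite IH.
  - split; intros [E|E]; auto.
    + subst; auto.
    + left. destruct a as [a ha]; simpl in E; subst. f_equal; apply proof_irrelevance.
  - split; auto. intros [E|E]; auto. subst. destruct a; simpl in *; contradiction.
Qed.

Lemma filt_NoDup N l : NoDup l -> NoDup (filt N l).
Proof. induction l as [|x l IH]; simpl; intro nd; [constructor|]. inversion nd; subst.
  destruct excluded_middle_informative as [h|h]; auto. constructor; auto.
  intro i. apply filt_In in i. simpl in i. auto. Qed.

Lemma filt_len_notin N l : ~ In (binf N) l -> length (filt N l) = length l.
Proof. induction l as [|x l IH]; simpl; intro ni; auto.
  destruct excluded_middle_informative as [h|h]; simpl.
  - rewrite IH; auto.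
  - exfalso. apply NNPP in h. auto. Qed.

Lemma filt_len N l : NoDup l -> In (binf N) l -> S (length (filt N l)) = length l.
Proof. induction l as [|x l IH]; simpl; intros nd i; [contradiction|]. inversion nd; subst.
  destruct excluded_middle_informative as [h|h]; simpl.
  - destruct i as [i|i]; [congruence|]. rewrite IH; auto.
  - apply NNPP in h. subst. rewrite filt_len_notin; auto. Qed.

Lemma ptlist N (P : bcar N -> Prop) l k : NoDup l -> length l = S k ->
  (forall x, In x l <-> P x \/ x = binf N) ->
  exists l' : list (pt N), NoDup l' /\ length l' = k /\ (forall a, In a l' <-> P (proj1_sig a)).
Proof. intros nd len H. exists (filt N l). split; [apply filt_NoDup; auto|split].
  - assert (S (length (filt N l)) = length l) by (apply filt_len; auto; apply H; auto). lia.
  - intro a. rewrite filt_In, H. destruct a as [a ha]; simpl. intuition. Qed.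

Lemma NoDup_prod {A B} (l : list A) (l' : list B) : NoDup l -> NoDup l' -> NoDup (list_prod l l').
Proof. induction l as [|x l IH]; simpl; intros nd nd'; [constructor|]. inversion nd; subst.
  apply NoDup_app; auto.
  - apply NoDup_map_NoDup_ForallPairs; auto. intros u v _ _ e. inversion e; auto.
  - intros [u v] i1 i2. apply in_map_iff in i1. destruct i1 as [w [e _]]. inversion e; subst.
    apply in_prod_iff in i2. tauto. Qed.

Lemma HKF_smash M N : HB M N -> forall n k1 k2, HKF_is M (S n) k1 -> HKF_is N (S n) k2 ->
  HKF_is (smash M N) (S n) (k1 * k2).
Proof. intros H n k1 k2 [l1 (nd1&len1&H1)] [l2 (nd2&len2&H2)].
  destruct (ptlist M _ l1 k1 nd1 len1 H1) as [l1' (nd1'&len1'&H1')].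
  destruct (ptlist N _ l2 k2 nd2 len2 H2) as [l2' (nd2'&len2'&H2')].
  exists (None :: map Some (list_prod l1' l2')). split; [|split].
  - constructor.
    + intro i. apply in_map_iff in i. destruct i as [? [e _]]; discriminate.
    + apply NoDup_map_NoDup_ForallPairs. intros u v _ _ e; inversion e; auto.
      apply NoDup_prod; auto.
  - simpl. rewrite length_map, length_prod. congruence.
  - intros [[a b]|]; simpl; split.
    + intros [e|i]; [discriminate|]. left. apply in_map_iff in i. destruct i as [[u v] [e i]].
      inversion e; subst. apply in_prod_iff in i. rewrite H1', H2' in i.
      destruct a as [a ha], b as [b hb]. rewrite qN_smash by auto. tauto.
    + intros [h|h]; [|discriminate]. right. apply in_map_iff. exists (a, b). split; auto.
      apply in_prod_iff. rewrite H1', H2'. destruct a as [a ha], b as [b hb].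
      rewrite qN_smash in h by auto. tauto.
    + auto.
    + auto.
Qed.

Lemma ideal_inf N : is_binoid N -> forall p, is_ideal N p -> p (binf N).
Proof. intros B p [[a ha] cl]. rewrite <- (proj2 (proj2 (proj2 B)) a). auto. Qed.

Lemma prime_no_zero N : is_binoid N -> forall p, is_prime N p -> ~ p (bzero N).
Proof. intros B p [[_ cl] [[a ha] _]] h. apply ha. rewrite <- (proj1 (proj2 (proj2 B)) a).
  apply cl. auto. Qed.

Definition pM M N (P : smash_car M N -> Prop) (a : bcar M) := P (lft M N (a, bzero N)).
Definition pN M N (P : smash_car M N -> Prop) (b : bcar N) := P (lft M N (bzero M, b)).
Definition Qs M N (p : bcar M -> Prop) (q : bcar N -> Prop) (z : smash_car M N) :=
  p (fst (emb M N z)) \/ q (snd (emb M N z)).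

Lemma prime_add M N : HB M N -> forall P, is_prime (smash M N) P -> forall z w,
  P (smash_add M N z w) <-> P z \/ P w.
Proof. intros H P [[_ cl] [_ pr]] z w. split; [apply pr|].
  intros [h|h]; [apply cl; auto|]. rewrite smash_comm by auto. apply cl; auto. Qed.

Lemma P_decomp M N : HB M N -> forall P, is_prime (smash M N) P -> forall z,
  P z <-> pM M N P (fst (emb M N z)) \/ pN M N P (snd (emb M N z)).
Proof. intros H P hP z. pose proof H as (BM&BN&_&_). unfold pM, pN.
  rewrite <- prime_add by auto. rewrite lft_add by auto. unfold pair_add; simpl.
  rewrite (zero_r M BM), (proj1 (proj2 (proj2 BN))). rewrite <- surjective_pairing, lft_emb. tauto. Qed.

Lemma lft_inf_l M N b : lft M N (binf M, b) = None.
Proof. apply emb_inj. rewrite emb_lft. apply nrm_inf. auto. Qed.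
Lemma lft_inf_r M N a : lft M N (a, binf N) = None.
Proof. apply emb_inj. rewrite emb_lft. apply nrm_inf. auto. Qed.
Lemma lft_zero M N : HB M N -> lft M N (bzero M, bzero N) = smash_zero M N.
Proof. intro H. apply emb_inj. rewrite emb_lft, emb_zero by auto. apply nrm_fin; apply H. Qed.

Lemma P_None M N : HB M N -> forall P, is_prime (smash M N) P -> P None.
Proof. intros H P [[[a ha] cl] _]. rewrite <- (smash_None M N H a). apply cl; auto. Qed.

Lemma P_nozero M N : HB M N -> forall P, is_prime (smash M N) P -> ~ P (smash_zero M N).
Proof. intros H P [[_ cl] [[a ha] _]] h. apply ha. rewrite <- (smash_zero_add M N H a). apply cl; auto. Qed.

Lemma pM_prime M N : HB M N -> forall P, is_prime (smash M N) P -> is_prime M (pM M N P).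
Proof. intros H P hP. pose proof H as (BM&BN&_&_). unfold pM. split; [split|split].
  - exists (binf M). rewrite lft_inf_l. apply P_None; auto.
  - intros a b h. replace (bzero N) with (badd N (bzero N) (bzero N)) by apply BN.
    change (badd M a b, badd N (bzero N) (bzero N)) with (pair_add M N (a, bzero N) (b, bzero N)).
    rewrite <- lft_add by auto. apply prime_add; auto.
  - exists (bzero M). rewrite lft_zero by auto. apply P_nozero; auto.
  - intros a b h. replace (bzero N) with (badd N (bzero N) (bzero N)) in h by apply BN.
    change (badd M a b, badd N (bzero N) (bzero N)) with (pair_add M N (a, bzero N) (b, bzero N)) in h.
    rewrite <- lft_add in h by auto. apply prime_add in h; auto.
Qed.

Lemma pN_prime M N : HB M N -> forall P, is_prime (smash M N) P -> is_prime N (pN M N P).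
Proof. intros H P hP. pose proof H as (BM&BN&_&_). unfold pN. split; [split|split].
  - exists (binf N). rewrite lft_inf_r. apply P_None; auto.
  - intros a b h. replace (bzero M) with (badd M (bzero M) (bzero M)) by apply BM.
    change (badd M (bzero M) (bzero M), badd N a b) with (pair_add M N (bzero M, a) (bzero M, b)).
    rewrite <- lft_add by auto. apply prime_add; auto.
  - exists (bzero N). rewrite lft_zero by auto. apply P_nozero; auto.
  - intros a b h. replace (bzero M) with (badd M (bzero M) (bzero M)) in h by apply BM.
    change (badd M (bzero M) (bzero M), badd N a b) with (pair_add M N (bzero M, a) (bzero M, b)) in h.
    rewrite <- lft_add in h by auto. apply prime_add in h; auto.
Qed.

Lemma Qs_prime M N : HB M N -> forall p q, is_prime M p -> is_prime N q -> is_prime (smash M N) (Qs M N p q).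
Proof. intros H p q hp hq. pose proof H as (BM&BN&_&_). unfold Qs.
  assert (pinf := ideal_inf M BM p (proj1 hp)). assert (qinf := ideal_inf N BN q (proj1 hq)).
  split; [split|split].
  - exists None. simpl. auto.
  - intros z w h. change (badd (smash M N) z w) with (smash_add M N z w). rewrite emb_add by auto.
    destruct (nrm_cases M N (pair_add M N (emb M N z) (emb M N w))) as [[_ e]|(_&_&e)]; rewrite e; simpl; auto.
    unfold pair_add; simpl. destruct h as [h|h]; [left; apply hp|right; apply hq]; auto.
  - exists (smash_zero M N). rewrite emb_zero by auto. simpl.
    pose proof (prime_no_zero M BM p hp); pose proof (prime_no_zero N BN q hq); tauto.
  - intros z w. change (badd (smash M N) z w) with (smash_add M N z w). rewrite emb_add by auto.
    destruct (nrm_cases M N (pair_add M N (emb M N z) (emb M N w))) as [[h e]|(_&_&e)]; rewrite e; simpl.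
    + intros _. unfold pair_add in h; simpl in h. destruct h as [h|h].
      * rewrite <- h in pinf. apply (proj2 (proj2 hp)) in pinf. tauto.
      * rewrite <- h in qinf. apply (proj2 (proj2 hq)) in qinf. tauto.
    + unfold pair_add; simpl. intros [h|h]; [apply (proj2 (proj2 hp)) in h|apply (proj2 (proj2 hq)) in h]; tauto.
Qed.

Lemma chain_weaken {T} (p0 p1 : T -> Prop) l :
  (forall x, p0 x -> p1 x) -> strict_chain p1 l -> strict_chain p0 l.
Proof. destruct l as [|q l]; simpl; auto. intros h [[i [x [h1 h2]]] c]. split; auto.
  split; [auto|exists x; auto]. Qed.

Lemma last_nonempty {A} (r : A) l d d' : last (r :: l) d = last (r :: l) d'.
Proof. revert r; induction l as [|x l IH]; intro r; auto. simpl in *. apply (IH x). Qed.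

Lemma chain_app {T} (p : T -> Prop) l1 l2 :
  strict_chain p l1 -> strict_chain (last l1 p) l2 -> strict_chain p (l1 ++ l2).
Proof. revert p. induction l1 as [|q l1 IH]; simpl; intros p c1 c2; auto.
  destruct c1 as [s c1]. split; auto. apply IH; auto.
  destruct l1 as [|r l1]; auto. rewrite (last_nonempty r l1 q p). exact c2. Qed.

Lemma last_map {A B} (f : A -> B) l d : last (map f l) (f d) = f (last l d).
Proof. revert d; induction l as [|x l IH]; simpl; intro d; auto.
  destruct l; simpl; auto. apply IH. Qed.

Lemma last_Forall {A} (P : A -> Prop) l d : P d -> Forall P l -> P (last l d).
Proof. revert d; induction l as [|x l IH]; simpl; intros d hd hl; auto.
  inversion hl; subst. destruct l; auto. Qed.

Definition chain_from (N : binoid_data) (p : bcar N -> Prop) (a : nat) :=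
  exists l, length l = a /\ Forall (is_prime N) l /\ strict_chain p l.

Lemma upper M N : HB M N -> forall lP P0, is_prime (smash M N) P0 ->
  Forall (is_prime (smash M N)) lP -> strict_chain P0 lP ->
  exists a b, (length lP <= a + b)%nat /\ chain_from M (pM M N P0) a /\ chain_from N (pN M N P0) b.
Proof. intro H. induction lP as [|P1 rest IH]; intros P0 h0 hl c.
  - exists 0%nat, 0%nat. split; [simpl; lia|]. split; exists nil; simpl; auto.
  - inversion hl; subst. destruct c as [[inc [z [z1 z0]]] c].
    destruct (IH P1 H2 H3 c) as [a [b (hle & [lM (lenM&fM&cM)] & [lN (lenN&fN&cN)])]].
    rewrite P_decomp in z1, z0 by auto.
    assert (iM : forall x, pM M N P0 x -> pM M N P1 x) by (unfold pM; auto).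
    assert (iN : forall x, pN M N P0 x -> pN M N P1 x) by (unfold pN; auto).
    destruct z1 as [z1|z1].
    + exists (S a), b. split; [simpl; apply le_n_S; exact hle|]. split.
      * exists (pM M N P1 :: lM). split; [simpl; lia|]. split.
        -- constructor; auto. apply pM_prime; auto.
        -- simpl. split; auto. split; auto. exists (fst (emb M N z)). tauto.
      * exists lN. split; auto. split; auto. eapply chain_weaken; eauto.
    + exists a, (S b). split; [simpl; rewrite <- plus_n_Sm; apply le_n_S; exact hle|]. split.
      * exists lM. split; auto. split; auto. eapply chain_weaken; eauto.
      * exists (pN M N P1 :: lN). split; [simpl; lia|]. split.
        -- constructor; auto. apply pN_prime; auto.
        -- simpl. split; auto. split; auto. exists (snd (emb M N z)). tauto.
Qed.

Lemma chainM M N : HB M N -> forall q, is_prime N q -> forall l p, is_prime M p ->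
  Forall (is_prime M) l -> strict_chain p l ->
  strict_chain (Qs M N p q) (map (fun p => Qs M N p q) l).
Proof. intros H q hq. pose proof H as (BM&BN&h1&h2). induction l as [|p1 l IH]; simpl; intros p hp hl c; auto.
  inversion hl; subst. destruct c as [[inc [x [x1 x0]]] c]. split; [|apply IH; auto].
  split.
  - unfold Qs. intros z [h|h]; auto.
  - exists (lft M N (x, bzero N)). unfold Qs. rewrite emb_lft.
    assert (x <> binf M) by (intro e; subst; apply x0; apply ideal_inf; auto; apply hp).
    rewrite nrm_fin by auto. simpl. pose proof (prime_no_zero N BN q hq). tauto.
Qed.

Lemma chainN M N : HB M N -> forall p, is_prime M p -> forall l q, is_prime N q ->
  Forall (is_prime N) l -> strict_chain q l ->
  strict_chain (Qs M N p q) (map (fun q => Qs M N p q) l).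
Proof. intros H p hp. pose proof H as (BM&BN&h1&h2). induction l as [|p1 l IH]; simpl; intros q hq hl c; auto.
  inversion hl; subst. destruct c as [[inc [x [x1 x0]]] c]. split; [|apply IH; auto].
  split.
  - unfold Qs. intros z [h|h]; auto.
  - exists (lft M N (bzero M, x)). unfold Qs. rewrite emb_lft.
    assert (x <> binf N) by (intro e; subst; apply x0; apply ideal_inf; auto; apply hq).
    rewrite nrm_fin by auto. simpl. pose proof (prime_no_zero M BM p hp). tauto.
Qed.

Lemma dim_smash M N : HB M N -> forall dM dN, is_dim M dM -> is_dim N dN ->
  is_dim (smash M N) (dM + dN).
Proof. intros H dM dN [[p0 [lp (lenp&hp0&hlp&cp)]] bM] [[q0 [lq (lenq&hq0&hlq&cq)]] bN]. split.
  - exists (Qs M N p0 q0), (map (fun p => Qs M N p q0) lp ++ map (fun q => Qs M N (last lp p0) q) lq).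
    split; [rewrite length_app, !length_map; lia|]. split; [apply Qs_prime; auto|]. split.
    + apply Forall_app; split; apply Forall_map.
      * eapply Forall_impl; [|exact hlp]. intros p hp; apply Qs_prime; auto.
      * eapply Forall_impl; [|exact hlq]. intros q hq; apply Qs_prime; auto. apply last_Forall; auto.
    + apply chain_app.
      * apply chainM; auto.
      * rewrite (last_map (fun p => Qs M N p q0)). apply chainN; auto. apply last_Forall; auto.
  - intros k [P0 [lP (len&h0&hl&c)]].
    destruct (upper M N H lP P0 h0 hl c) as [a [b (hle & [lM (lenM&fM&cM)] & [lN (lenN&fN&cN)])]].
    assert (a <= dM)%nat. { apply bM. exists (pM M N P0), lM. split; [auto|split; [apply pM_prime; auto|split; auto]]. }
    assert (b <= dN)%nat. { apply bN. exists (pN M N P0), lN. split; [auto|split; [apply pN_prime; auto|split; auto]]. }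
    lia.
Qed.
Open Scope R_scope.

Theorem mainTheorem10 (M N : binoid_data) (eM eN : R) :
  is_binoid M -> is_binoid N ->
  fin_generated M -> fin_generated N ->
  semipositive M -> semipositive N ->
  (exists d, is_dim M d) -> (exists d, is_dim N d) ->
  eHK_is M eM -> eHK_is N eN ->
  eHK_is (smash M N) (eM * eN).
Proof.
  intros BM BN _ _ SM SN _ _ [dM [hdM [hM [HM cM]]]] [dN [hdN [hN [HN cN]]]].
  assert (H : HB M N) by (split; [|split; [|split]]; auto; apply zero_ne_inf; auto).
  exists (dM + dN)%nat. split; [apply dim_smash; auto|].
  exists (fun n => (hM n * hN n)%nat). split.
  - intro n. apply HKF_smash; auto.
  - replace (fun n => INR (hM n * hN n) / INR (S n) ^ (dM + dN))
      with (fun n => (INR (hM n) / INR (S n) ^ dM) * (INR (hN n) / INR (S n) ^ dN)).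
    + apply CV_mult; auto.
    + apply functional_extensionality. intro n. rewrite mult_INR, pow_add.
      assert (INR (S n) <> 0) by (apply not_0_INR; lia).
      field. split; apply pow_nonzero; auto.
Qed.
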